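(* For every positive integer $n$, the map sending a minimal cover $\{S_1,\dots,S_k\}$ of $[n]$ to the undirected graph on $[n]$ in which distinct $v,w$ are adjacent iff $v,w\in S_i$ for some $i$, is a bijection from the set of minimal covers of $[n]$ onto the set of UEC-representatives on vertex set $[n]$.
   Context: A minimal cover of a finite set $S$ is a collection $\{S_1,\dots,S_k\}$ of nonempty subsets of $S$ such that for $T\subseteq[k]$ we have $\bigcup_{i\in T}S_i=S$ iff $T=[k]$. For a DAG $\mathcal{D}$, a trek is a path with no repeated vertices and no collider; the unconditional dependence graph $\mathcal{U}^\mathcal{D}$ is the undirected graph on the nodes of $\mathcal{D}$ in which distinct $v,w$ are adjacent iff there is a trek between them. An undirected graph on $[n]$ is a UEC-representative if it equals $\mathcal{U}^\mathcal{D}$ for some DAG $\mathcal{D}$ on $[n]$. *)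

(* Defs.v *)
From mathcomp Require Import all_boot.
Set Implicit Arguments. Unset Strict Implicit. Unset Printing Implicit Defensive.

(* An undirected (simple) graph on 'I_n is represented by its edge set:
   a set of 2-element subsets of 'I_n. *)
Definition simple_graph n (G : {set {set 'I_n}}) : Prop :=
  forall e, e \in G -> #|e| = 2.

Definition dag n (D : rel 'I_n) : Prop :=
  forall x y, D x y -> ~~ connect D y x.

Fixpoint no_collider n (D : rel 'I_n) (s : seq 'I_n) : bool :=
  match s with
  | a :: ((b :: c :: _) as t) => ~~ (D a b && D c b) && no_collider D t
  | _ => true
  end.

Definition trek n (D : rel 'I_n) (v w : 'I_n) : Prop :=
  exists p : seq 'I_n,
    [/\ path (fun a b => D a b || D b a) v p, last v p = w,
        uniq (v :: p) & no_collider D (v :: p)].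

Definition is_udg n (D : rel 'I_n) (G : {set {set 'I_n}}) : Prop :=
  simple_graph G /\
  forall v w : 'I_n, v != w -> ([set v; w] \in G <-> trek D v w).

Definition UEC_rep n (G : {set {set 'I_n}}) : Prop :=
  exists D : rel 'I_n, dag D /\ is_udg D G.

Definition min_cover n (C : {set {set 'I_n}}) : bool :=
  (set0 \notin C) &&
  [forall A : {set {set 'I_n}},
      (A \subset C) ==> ((cover A == [set: 'I_n]) == (A == C))].

Definition cover_graph n (C : {set {set 'I_n}}) : {set {set 'I_n}} :=
  [set e : {set 'I_n} | (#|e| == 2) && [exists S in C, e \subset S]].

(* Main.v *)
Require Import Defs.
From mathcomp Require Import all_boot.
Set Implicit Arguments. Unset Strict Implicit. Unset Printing Implicit Defensive.

Lemma fwd n (D : rel 'I_n) a b p : D a b ->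
  path (fun x y => D x y || D y x) b p -> no_collider D [:: a, b & p] ->
  connect D a (last b p).
Proof.
elim: p a b => [|c p IH] a b Dab /=.
  by move=> _ _; exact: connect1.
case/andP=> Ebc Hp /andP[Hn Hnc].
have Dbc : D b c by move: Ebc Hn; rewrite Dab /=; case: (D b c) => //= ->.
apply: connect_trans (connect1 Dab) _; exact: IH.
Qed.

Lemma trek_anc n (D : rel 'I_n) v w : trek D v w -> exists t, connect D t v && connect D t w.
Proof.
case=> p [Hp Hl _ Hn].
elim: p v Hp Hl Hn => [|b p IH] v /=.
  by move=> _ <- _; exists v; rewrite connect0.
case/andP=> Evb Hp Hl Hn.
have Hn' : no_collider D (b::p).
  by case: p {Hp Hl IH} Hn => [|c p] //= /andP[].
have [t /andP[tb tw]] := IH b Hp Hl Hn'.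
case/orP: Evb => [Dvb|Dbv].
  by exists v; rewrite connect0 -Hl; exact: fwd Dvb Hp Hn.
by exists t; rewrite tw andbT; exact: connect_trans tb (connect1 Dbv).
Qed.

Lemma dag_asym n (D : rel 'I_n) (H : dag D) x y : D x y -> ~~ D y x.
Proof. by move=> Dxy; apply: contra (H _ _ Dxy); apply: connect1. Qed.

Lemma nc3 n (D : rel 'I_n) a b c s : no_collider D [:: a, b, c & s] =
  ~~ (D a b && D c b) && no_collider D [:: b, c & s].
Proof. by []. Qed.

Lemma nc_fwd n (D : rel 'I_n) (H : dag D) u q : path D u q -> no_collider D (u::q).
Proof.
elim: q u => [|b q IH] u; first by [].
move=> /andP[Dub Hq].
case: q IH Hq => [|c q] IH Hq; first by [].
rewrite nc3 (IH b Hq) andbT.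
case/andP: Hq => Dbc _.
by rewrite (negbTE (dag_asym H Dbc)) andbF.
Qed.

Lemma nc_back n (D : rel 'I_n) (H : dag D) a b s : D b a -> no_collider D (b::s) ->
  no_collider D (a::b::s).
Proof.
case: s => [|c s] //= Dba ->.
by rewrite (negbTE (dag_asym H Dba)).
Qed.

Lemma nc_catrev n (D : rel 'I_n) (H : dag D) r b s : path D b r -> no_collider D (b::s) ->
  no_collider D (catrev r (b::s)).
Proof.
elim: r b s => [|x r IH] b s //= /andP[Dbx Hr] Hn.
by apply: IH Hr _; exact: nc_back.
Qed.

Lemma sorted_catrev n (D : rel 'I_n) r b s : path D b r ->
  path (fun x y => D x y || D y x) b s ->
  sorted (fun x y => D x y || D y x) (catrev r (b::s)).
Proof.
elim: r b s => [|x r IH] b s //= /andP[Dbx Hr] Hs.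
by apply: IH Hr _; rewrite /= Hs Dbx orbT.
Qed.

Lemma catrev_head (T : Type) (r : seq T) b s : exists p, catrev r (b::s) = last b r :: p.
Proof.
elim: r b s => [|x r IH] b s /=; first by exists s.
exact: IH.
Qed.

Lemma connect_uniq n (D : rel 'I_n) x y : connect D x y ->
  exists p, [/\ path D x p, last x p = y & uniq (x::p)].
Proof.
case/connectP=> p Hp ->.
case: (shortenP Hp) => p' Hp' Hu _.
by exists p'.
Qed.

Lemma path_to_last n (D : rel 'I_n) u r x : path D u r -> x \in r -> connect D x (last u r).
Proof.
move=> Hp Hx; case/splitPr: Hx Hp => r1 r2.
rewrite cat_path last_cat /= => /andP[_ /andP[_ H]].
by apply/connectP; exists r2.
Qed.

Lemma split_anc n (D : rel 'I_n) v m x p : size p <= m -> path D x p -> uniq (x::p) ->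
  connect D x v -> exists u q, [/\ connect D u v, path D u q, last u q = last x p,
     uniq (u::q) & all (fun y => ~~ connect D y v) q].
Proof.
elim: m x p => [|m IH] x p Hs Hp Hu Hxv.
  case: p Hs Hp Hu => // _ _ _; by exists x, [::].
case Hh: (has (fun y => connect D y v) p); last first.
  exists x, p; split => //.
  by move/negbT: Hh; rewrite -all_predC.
case/hasP: Hh => y Hy Hyv.
case/splitPr: Hy Hs Hp Hu => p1 p2.
rewrite size_cat /= cat_path last_cat /= => Hs /andP[_ /andP[_ Hp2]] Hu.
have Hs2 : size p2 <= m by move: Hs; rewrite addnS ltnS; apply: leq_trans; apply: leq_addl.
have Hu2 : uniq (y::p2).
  by move: Hu; rewrite cons_uniq cat_uniq => /andP[_ /and3P[_ _ H]].
exact: IH Hs2 Hp2 Hu2 Hyv.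
Qed.

Lemma anc_trek n (D : rel 'I_n) (H : dag D) v w t :
  connect D t v -> connect D t w -> trek D v w.
Proof.
move=> Htv Htw.
have [q0 [Hq0 Hl0 Hu0]] := connect_uniq Htw.
have [u [q [Huv Hq Hlq Huq Hall]]] := split_anc (leqnn _) Hq0 Hu0 Htv.
rewrite Hl0 in Hlq.
have [r [Hr Hlr Hur]] := connect_uniq Huv.
have [p Hs] := catrev_head r u q.
rewrite Hlr in Hs.
exists p; split.
- have := sorted_catrev Hr (sub_path (fun a b (h : D a b) => introT orP (or_introl h)) Hq).
  by move=> HH; change (sorted (fun a b : 'I_n => D a b || D b a) (v :: p)); rewrite -Hs.
- by rewrite -[last v p]/(last v (v::p)) -Hs catrevE last_cat.
- rewrite -Hs catrevE cat_uniq rev_uniq Huq.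
  move: Hur; rewrite cons_uniq => /andP[Hur1 Hur2]; rewrite Hur2 andbT andTb.
  apply/hasPn => y Hy; rewrite /= mem_rev.
  move: Hy; rewrite inE => /orP[/eqP -> //|Hy].
  apply/negP => Hyr.
  have := path_to_last Hr Hyr; rewrite Hlr.
  by move/allP: Hall => /(_ y Hy) /negbTE ->.
- rewrite -Hs; apply: nc_catrev => //; exact: nc_fwd.
Qed.

Lemma source_anc n (D : rel 'I_n) (H : dag D) v :
  exists2 s, [forall y, ~~ D y s] & connect D s v.
Proof.
move: {2}#|_| (leqnn #|[set x | connect D x v]|) => m.
elim: m v => [|m IH] v Hm; case: (boolP [forall y, ~~ D y v]) => Hs;
  try by exists v.
all: move/forallPn: Hs => [y /negPn Dyv].
all: have Hp : [set x | connect D x y] \proper [set x | connect D x v].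
all: try (apply/properP; split;
  [apply/subsetP => x; rewrite !inE => Hx; exact: connect_trans Hx (connect1 Dyv)
  | exists v; rewrite !inE ?connect0 //; exact: H Dyv]).
all: have := proper_card Hp.
  by move=> Hlt; have := leq_trans Hlt Hm.
move=> Hlt; have [s Hs Hsy] := IH y (leq_trans (Hlt : _ < _) Hm).
by exists s => //; exact: connect_trans Hsy (connect1 Dyv).
Qed.

Definition De n (D : rel 'I_n) s := [set x | connect D s x].
Definition srcs n (D : rel 'I_n) := [set s | [forall y, ~~ D y s]].
Definition CD n (D : rel 'I_n) := [set De D s | s in srcs D].

Lemma CD_pair n (D : rel 'I_n) (H : dag D) v w :
  (exists t, connect D t v && connect D t w) <-> [exists S in CD D, (v \in S) && (w \in S)].
Proof.
split.
  case=> t /andP[Htv Htw]; have [s Hs Hst] := source_anc H t.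
  apply/existsP; exists (De D s); rewrite imset_f ?inE //.
  by rewrite (connect_trans Hst Htv) (connect_trans Hst Htw).
case/existsP => S /and3P[/imsetP[s _ ->] Hv Hw]; exists s.
by rewrite !inE in Hv Hw; rewrite Hv Hw.
Qed.

Lemma CD_cover n (D : rel 'I_n) (H : dag D) : cover (CD D) = setT.
Proof.
apply/setP => v; rewrite inE; apply/bigcupP.
have [s Hs Hsv] := source_anc H v.
by exists (De D s); rewrite ?imset_f ?inE.
Qed.

Lemma src_eq n (D : rel 'I_n) s s' : [forall y, ~~ D y s] -> connect D s' s -> s' = s.
Proof.
move=> /forallP Hs /connectP[p Hp Hl].
case/lastP: p Hp Hl => [|p x] //=; rewrite rcons_path last_rcons => /andP[_ Hx] Hl.
by subst x; have := Hs (last s' p); rewrite Hx.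
Qed.

Lemma CD_min n (D : rel 'I_n) (H : dag D) : min_cover (CD D).
Proof.
rewrite /min_cover; apply/andP; split.
  apply/imsetP => [[s _ Hs]].
  have : s \in De D s by rewrite inE connect0.
  by rewrite -Hs inE.
apply/forallP => A; apply/implyP => HA.
case: (boolP (A == CD D)) => [/eqP -> | Hne]; first by rewrite (CD_cover H) !eqxx.
rewrite eqbF_neg; apply: contra Hne => /eqP Hc; rewrite eqEsubset HA /=.
apply/subsetP => S /imsetP[s Hs ->].
have : s \in cover A by rewrite Hc inE.
case/bigcupP => S' HS' Hsin.
have := subsetP HA S' HS'; case/imsetP => s' Hs' E; subst S'.
rewrite inE in Hsin; rewrite inE in Hs.
by rewrite -(src_eq Hs Hsin).
Qed.

Lemma uec_cover n (G : {set {set 'I_n}}) : UEC_rep G -> exists2 C, min_cover C & cover_graph C = G.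
Proof.
case=> D [H [Hsimp Hiff]]; exists (CD D); first exact: CD_min.
apply/setP => e; rewrite /cover_graph inE.
case: (boolP (#|e| == 2)) => He /=.
  case/cards2P: He => v [w [Hvw ->]].
  have E1 : [exists S in CD D, [set v; w] \subset S] =
            [exists S in CD D, (v \in S) && (w \in S)].
    by apply: eq_existsb => S; rewrite subUset !sub1set.
  rewrite E1; apply/idP/idP => Hx.
    apply/(Hiff _ _ Hvw).
    have [t /andP[Htv Htw]] := (CD_pair H v w).2 Hx.
    exact (anc_trek H Htv Htw).
  by apply/(CD_pair H v w); apply: trek_anc; apply/(Hiff _ _ Hvw).
apply/esym/negbTE/negP => /Hsimp /eqP.
by rewrite (negbTE He).
Qed.

Definition privb n (C : {set {set 'I_n}}) (S : {set 'I_n}) x :=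
  (x \in S) && [forall S' in C, (x \in S') ==> (S' == S)].
Definition pk n (C : {set {set 'I_n}}) S := [pick x | privb C S x].
Definition Dc n (C : {set {set 'I_n}}) : rel 'I_n :=
  fun x y => (x != y) && [exists S in C, (pk C S == Some x) && (y \in S)].

Lemma min_cover_cover n (C : {set {set 'I_n}}) : min_cover C -> cover C = setT.
Proof.
case/andP=> _ /forallP /(_ C) /implyP /(_ (subxx C)).
by rewrite eqxx => /eqP /eqP.
Qed.

Lemma min_cover_priv n (C : {set {set 'I_n}}) S : min_cover C -> S \in C -> exists x, privb C S x.
Proof.
move=> Hm HS; have Hc := min_cover_cover Hm.
case/andP: Hm => _ /forallP /(_ (C :\ S)) /implyP /(_ (subD1set C S)).
have -> : (C :\ S == C) = false.
  by apply/negbTE/negP => /eqP E; move: HS; rewrite -E !inE eqxx.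
rewrite eqbF_neg eqEsubset subsetT /= => /subsetPn[x _ Hx].
have Hx' : forall S', S' \in C -> x \in S' -> S' = S.
  move=> S' HS' HxS'; apply/eqP; apply/negPn/negP => Hne.
  by move/negP: Hx; apply; apply/bigcupP; exists S' => //; rewrite !inE Hne.
have : x \in cover C by rewrite Hc inE.
case/bigcupP => S0 HS0 HxS0.
exists x; rewrite /privb -(Hx' S0 HS0 HxS0) HxS0 /=.
apply/forallP => S'; apply/implyP => HS'; apply/implyP => HxS'.
by rewrite (Hx' S' HS' HxS') (Hx' S0 HS0 HxS0).
Qed.

Lemma pk_priv n (C : {set {set 'I_n}}) S x : pk C S = Some x -> privb C S x.
Proof. by rewrite /pk; case: pickP => // x' Hx' [<-]. Qed.

Lemma pk_spec n (C : {set {set 'I_n}}) S : min_cover C -> S \in C ->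
  exists x, pk C S = Some x /\ privb C S x.
Proof.
move=> Hm HS; rewrite /pk; case: pickP => [x Hx|H0]; first by exists x.
by have [x Hx] := min_cover_priv Hm HS; rewrite H0 in Hx.
Qed.

Lemma Dc_mem n (C : {set {set 'I_n}}) t x : Dc C t x ->
  exists2 S, S \in C & [/\ pk C S = Some t, t \in S & x \in S].
Proof.
case/andP=> _ /existsP[S /and3P[HS /eqP Hp Hx]]; exists S => //.
by split => //; case/andP: (pk_priv Hp).
Qed.

Lemma Dc_src n (C : {set {set 'I_n}}) x y z : Dc C x y -> ~~ Dc C y z.
Proof.
move=> Dxy; apply/negP => Dyz.
case/andP: (Dxy) => Hxy _.
have [S HS [Hp _ Hy]] := Dc_mem Dxy.
have [S' HS' [Hp' _ _]] := Dc_mem Dyz.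
case/andP: (pk_priv Hp') => _ /forallP /(_ S) /implyP /(_ HS) /implyP /(_ Hy) /eqP E.
by subst S'; rewrite Hp in Hp'; case: Hp' => E; rewrite E eqxx in Hxy.
Qed.

Lemma Dc_dag n (C : {set {set 'I_n}}) : dag (Dc C).
Proof.
move=> x y Dxy; apply/negP => /connectP[p Hp Hl].
case: p Hp Hl => [|z p] /=.
  by move=> _ E; subst x; case/andP: Dxy; rewrite eqxx.
by case/andP => Dyz _ _; move/negP: (Dc_src z Dxy).
Qed.

Lemma Dc_anc n (C : {set {set 'I_n}}) t v : connect (Dc C) t v -> t = v \/ Dc C t v.
Proof.
case/connectP => p Hp Hl.
case: p Hp Hl => [|z p] /=; first by left.
case/andP => Dtz Hp.
case: p Hp => [|z' p] /=; first by move=> _ ->; right.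
by case/andP => Dzz' _; move/negP: (Dc_src z' Dtz).
Qed.

Lemma Dc_pair n (C : {set {set 'I_n}}) (Hm : min_cover C) v w : v != w ->
  (exists t, connect (Dc C) t v && connect (Dc C) t w) <->
  [exists S in C, (v \in S) && (w \in S)].
Proof.
move=> Hvw; split.
  case=> t /andP[/Dc_anc Htv /Dc_anc Htw].
  case: Htv => [Etv|Dtv]; case: Htw => [Etw|Dtw].
  - by subst; rewrite eqxx in Hvw.
  - subst t; have [S HS [_ H1 H2]] := Dc_mem Dtw.
    by apply/existsP; exists S; rewrite HS H1 H2.
  - subst t; have [S HS [_ H1 H2]] := Dc_mem Dtv.
    by apply/existsP; exists S; rewrite HS H1 H2.
  - have [S HS [Hp H1 H2]] := Dc_mem Dtv.
    have [S' HS' [Hp' H1' H2']] := Dc_mem Dtw.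
    case/andP: (pk_priv Hp) => _ /forallP /(_ S') /implyP /(_ HS') /implyP /(_ H1') /eqP E.
    by subst S'; apply/existsP; exists S; rewrite HS H2 H2'.
case/existsP => S /and3P[HS Hv Hw].
have [x [Hpk Hpriv]] := pk_spec Hm HS.
have Hc : forall y, y \in S -> connect (Dc C) x y.
  move=> y Hy; case: (eqVneq x y) => [->|Hxy]; first exact: connect0.
  apply: connect1; rewrite /Dc Hxy /=; apply/existsP; exists S.
  by rewrite HS Hpk eqxx Hy.
by exists x; rewrite !Hc.
Qed.

Lemma cover_uec n (C : {set {set 'I_n}}) : min_cover C -> UEC_rep (cover_graph C).
Proof.
move=> Hm; exists (Dc C); split; first exact: Dc_dag.
split.
  by move=> e; rewrite inE => /andP[/eqP -> _].
move=> v w Hvw; rewrite inE cards2 Hvw /=.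
have E1 : [exists S in C, [set v; w] \subset S] =
          [exists S in C, (v \in S) && (w \in S)].
  by apply: eq_existsb => S; rewrite subUset !sub1set.
rewrite E1; split => Hx.
  have [t /andP[Htv Htw]] := (Dc_pair Hm Hvw).2 Hx.
  exact (anc_trek (@Dc_dag n C) Htv Htw).
by apply/(Dc_pair Hm Hvw); apply: trek_anc.
Qed.

Definition nb n (G : {set {set 'I_n}}) x := [set y | (y == x) || ([set x; y] \in G)].

Lemma nb_priv n (C : {set {set 'I_n}}) S x : S \in C -> privb C S x ->
  nb (cover_graph C) x = S.
Proof.
move=> HS /andP[HxS /forallP Hp]; apply/setP => y; rewrite !inE.
case: (eqVneq y x) => [->|Hyx] /=; first by rewrite HxS.
rewrite cards2 (eq_sym x) Hyx /=; apply/existsP/idP.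
  case=> S' /andP[HS' ]; rewrite subUset !sub1set => /andP[Hx Hy].
  by move: (Hp S'); rewrite HS' Hx /= => /eqP <-.
by move=> Hy; exists S; rewrite HS subUset !sub1set HxS Hy.
Qed.

Lemma clique n (C : {set {set 'I_n}}) S x : S \in C -> x \in S ->
  S \subset nb (cover_graph C) x.
Proof.
move=> HS Hx; apply/subsetP => y Hy; rewrite inE.
case: (eqVneq y x) => [//|Hyx] /=.
rewrite inE cards2 (eq_sym x) Hyx /=; apply/existsP; exists S.
by rewrite HS subUset !sub1set Hx Hy.
Qed.

Lemma inj_sub n (C1 C2 : {set {set 'I_n}}) : min_cover C1 -> min_cover C2 ->
  cover_graph C1 = cover_graph C2 -> C1 \subset C2.
Proof.
move=> H1 H2 HG; apply/subsetP => S HS.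
have [x Hx] := min_cover_priv H1 HS.
have : x \in cover C2 by rewrite (min_cover_cover H2) inE.
case/bigcupP => S' HS' HxS'.
have E1 : S' \subset S by rewrite -(nb_priv HS Hx) HG; exact: clique.
have [x' Hx'] := min_cover_priv H2 HS'.
have Hx'S : x' \in S by apply: (subsetP E1); case/andP: Hx'.
have E2 : S \subset S' by rewrite -(nb_priv HS' Hx') -HG; exact: clique.
have -> : S = S' by apply/eqP; rewrite eqEsubset E1 E2.
done.
Qed.

Theorem proposition2p13 (n : nat) : 0 < n ->
  {in [pred C | min_cover C] &, injective (@cover_graph n)} /\
  (forall G : {set {set 'I_n}},
      UEC_rep G <-> exists2 C, min_cover C & cover_graph C = G).
Proof.
move=> _; split.
  move=> C1 C2; rewrite !inE => H1 H2 HG.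
  by apply/eqP; rewrite eqEsubset (inj_sub H1 H2 HG) (inj_sub H2 H1 (esym HG)).
move=> G; split; first exact: uec_cover.
by case=> C HC <-; exact: cover_uec.
Qed.
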